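(* Let $\tau=\{(\lambda_i,\nu_i,a_i)\}_{i=1}^k$ satisfy $\lambda_i\ge0$, $\sum_i\lambda_i=1$, $\nu_i\in\Delta(\Omega)$, $a_i\in A$, and $\sum_i\lambda_i\nu_i=\mu_0$. Let $\nu_i'\in\Delta(\Omega)$ be such that $\|\nu_i'-\nu_i\|_2\le\epsilon$ whenever $\nu_i'\neq\nu_i$, and $\sum_{i:\nu_i'\ne\nu_i}\lambda_i\le p$. Then there exist weights $\hat\lambda_i\ge0$, $\hat\lambda_+\ge0$ with $\sum_i\hat\lambda_i+\hat\lambda_+=1$, and a posterior $\nu_+$ with $\|\nu_+-\mu_0\|_2\le\delta/2$ (so $\nu_+\in\Delta(\Omega)\cap R$), such that the augmented scheme $\hat\tau=\{(\hat\lambda_i,\nu_i',a_i)\}_{i}\cup\{(\hat\lambda_+,\nu_+,a_0)\}$ satisfies $\sum_i\hat\lambda_i\nu_i'+\hat\lambda_+\nu_+=\mu_0$ and $$|U_S(\tau)-U_S(\hat\tau)|\le U_{\max}\Big(\sqrt{|\Omega|}+\frac4\delta\Big)p\,\epsilon.$$ If $\sum_i\lambda_i\nu_i'=\mu_0$, one may take $\hat\lambda_+=0$.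
   Context: Finite $\Omega$ and $A$, prior $\mu_0\in\Delta(\Omega)$, sender utility $u_S:A\times\Omega\to\mathbb R$, and $U_{\max}=\max_{a,\omega}|u_S(a,\omega)|$. For a finite list of triples $\sigma=\{(w_j,\nu_j,a_j)\}$, the sender value is $U_S(\sigma)=\sum_jw_j\sum_\omega\nu_j(\omega)u_S(a_j,\omega)$. Fix an action $a_0\in A$, a set $R\subseteq\Delta(\Omega)$, and $\delta>0$ such that every $\nu\in\mathbb R^\Omega$ with $\mathbf 1^\top\nu=1$ and $\|\nu-\mu_0\|_2\le\delta/2$ lies in $\Delta(\Omega)\cap R$. In the paper, $R$ is the interval-safe default-action region and $\delta=\delta_{\mu_0}$. *)

(* Defs.v *)
From mathcomp Require Import all_boot all_order all_algebra.
Set Implicit Arguments. Unset Strict Implicit. Unset Printing Implicit Defensive.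
Import Order.TTheory GRing.Theory Num.Theory.
Local Open Scope ring_scope.

Section Defs.
Variables (R : rcfType) (Omega A : finType).

Definition isDist (nu : {ffun Omega -> R}) : Prop :=
  (forall w, 0 <= nu w) /\ \sum_(w : Omega) nu w = 1.

Definition dist2 (x y : {ffun Omega -> R}) : R :=
  Num.sqrt (\sum_(w : Omega) (x w - y w) ^+ 2).

Definition Umax (uS : A -> Omega -> R) : R :=
  \big[Num.max/0]_(a : A) \big[Num.max/0]_(w : Omega) `|uS a w|.

Definition US (uS : A -> Omega -> R) (s : seq (R * {ffun Omega -> R} * A)) : R :=
  \sum_(t <- s) t.1.1 * \sum_(w : Omega) t.1.2 w * uS t.2 w.

Definition scheme (k : nat) (lam : 'I_k -> R) (nu : 'I_k -> {ffun Omega -> R})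
  (a : 'I_k -> A) : seq (R * {ffun Omega -> R} * A) :=
  [seq (lam i, nu i, a i) | i <- enum 'I_k].
End Defs.

(* Main.v *)
Require Import Defs.
From mathcomp Require Import all_boot all_order all_algebra.
From mathcomp Require Import ring lra.
Import Order.TTheory GRing.Theory Num.Theory.
Local Open Scope ring_scope.

Lemma CS (R : rcfType) (I : finType) (f g : I -> R) :
  \sum_i f i * g i <= Num.sqrt (\sum_i f i ^+ 2) * Num.sqrt (\sum_i g i ^+ 2).
Proof.
set X := Num.sqrt _; set Y := Num.sqrt _.
have sf : 0 <= \sum_i f i ^+ 2 by apply: sumr_ge0 => i _; exact: sqr_ge0.
have sg : 0 <= \sum_i g i ^+ 2 by apply: sumr_ge0 => i _; exact: sqr_ge0.
have hX : X ^+ 2 = \sum_i f i ^+ 2 by rewrite sqr_sqrtr.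
have hY : Y ^+ 2 = \sum_i g i ^+ 2 by rewrite sqr_sqrtr.
have X0 : 0 <= X by exact: sqrtr_ge0.
have Y0 : 0 <= Y by exact: sqrtr_ge0.
have key : 2 * (X * Y) * \sum_i f i * g i <= 2 * (X * Y) * (X * Y).
  rewrite mulr_sumr.
  have -> : 2 * (X * Y) * (X * Y) = \sum_i (Y ^+ 2 * f i ^+ 2 + X ^+ 2 * g i ^+ 2).
    by rewrite big_split /= -!mulr_sumr -hX -hY; ring.
  apply: ler_sum => i _.
  have := sqr_ge0 (Y * f i - X * g i); nra.
have [XY0|] := ltrP 0 (X * Y).
  have : 0 < 2 * (X * Y) by rewrite mulr_gt0.
  by move=> h; rewrite -(ler_pM2l h).
move=> XYle.
have XY0 : X * Y = 0 by apply/le_anti; rewrite XYle mulr_ge0.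
move: XY0 => /eqP; rewrite mulf_eq0 => /orP [] /eqP Z.
- have : \sum_i f i ^+ 2 = 0 by rewrite -hX Z expr0n.
  move/(psumr_eq0P (fun i _ => sqr_ge0 (f i))) => H.
  rewrite Z mul0r big1 // => i _.
  have := H i isT; move/eqP; rewrite sqrf_eq0 => /eqP ->.
  by rewrite mul0r.
- have : \sum_i g i ^+ 2 = 0 by rewrite -hY Z expr0n.
  move/(psumr_eq0P (fun i _ => sqr_ge0 (g i))) => H.
  rewrite Z mulr0 big1 // => i _.
  have := H i isT; move/eqP; rewrite sqrf_eq0 => /eqP ->.
  by rewrite mulr0.
Qed.
Arguments CS {R I}.

Lemma normCS (R : rcfType) (I : finType) (f g : I -> R) :
  `|\sum_i f i * g i| <= Num.sqrt (\sum_i f i ^+ 2) * Num.sqrt (\sum_i g i ^+ 2).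
Proof.
rewrite ler_norml CS andbT.
have := CS (fun i => - f i) g.
have -> : \sum_i (- f i) ^+ 2 = \sum_i f i ^+ 2 by apply: eq_bigr => i _; rewrite sqrrN.
have -> : \sum_i - f i * g i = - \sum_i f i * g i by rewrite -sumrN; apply: eq_bigr => i _; rewrite mulNr.
by rewrite lerNl.
Qed.
Arguments normCS {R I}.

Lemma l1_le (R : rcfType) (I : finType) (f : I -> R) :
  \sum_i `|f i| <= Num.sqrt (#|I|%:R) * Num.sqrt (\sum_i f i ^+ 2).
Proof.
have := CS (fun i => `|f i|) (fun _ => 1).
have -> : \sum_i `|f i| * 1 = \sum_i `|f i| by apply: eq_bigr => i _; rewrite mulr1.
have -> : \sum_i `|f i| ^+ 2 = \sum_i f i ^+ 2 by apply: eq_bigr => i _; rewrite real_normK ?num_real.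
have -> : \sum_(i : I) (1:R) ^+ 2 = \sum_(i : I) (1:R) by apply: eq_bigr => i _; rewrite expr1n.
by rewrite sumr_const mulrC.
Qed.
Arguments l1_le {R I}.

Lemma Umax_ge (R : rcfType) (Omega A : finType) (uS : A -> Omega -> R) b w :
  `|uS b w| <= Umax uS.
Proof.
rewrite /Umax.
apply: le_trans (le_bigmax _ (fun a => \big[Num.max/0]_(w : Omega) `|uS a w|) b).
exact: (le_bigmax _ (fun w => `|uS b w|) w).
Qed.

Lemma Umax_ge0 (R : rcfType) (Omega A : finType) (uS : A -> Omega -> R) :
  0 <= Umax uS.
Proof.
rewrite /Umax; apply: (big_ind (fun x => 0 <= x)) => //.
  by move=> x y hx hy; rewrite le_max hx.
move=> b _; apply: (big_ind (fun x => 0 <= x)) => //.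
by move=> x y hx hy; rewrite le_max hx.
Qed.

Lemma expect_le (R : rcfType) (Omega A : finType) (uS : A -> Omega -> R)
  (nu : {ffun Omega -> R}) b :
  isDist nu -> `|\sum_w nu w * uS b w| <= Umax uS.
Proof.
move=> [H0 H1].
apply: le_trans (ler_norm_sum _ _ _) _.
apply: le_trans (_ : \sum_w nu w * Umax uS <= _).
  apply: ler_sum => w _; rewrite normrM ger0_norm //.
  by apply: ler_wpM2l => //; apply: Umax_ge.
by rewrite -mulr_suml H1 mul1r.
Qed.

Lemma US_scheme (R : rcfType) (Omega A : finType) (uS : A -> Omega -> R) k
  (lam : 'I_k -> R) (nu : 'I_k -> {ffun Omega -> R}) (a : 'I_k -> A) :
  US uS (scheme lam nu a) = \sum_(i < k) lam i * \sum_w nu i w * uS (a i) w.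
Proof. by rewrite /US /scheme big_map big_enum. Qed.

Theorem lemmaD2 (R : rcfType) (Omega A : finType)
  (mu0 : {ffun Omega -> R}) (uS : A -> Omega -> R)
  (a0 : A) (Rset : {ffun Omega -> R} -> Prop) (delta : R)
  (Hmu0 : isDist mu0)
  (Hdelta : 0 < delta)
  (HR : forall nu : {ffun Omega -> R}, \sum_(w : Omega) nu w = 1 ->
          dist2 nu mu0 <= delta / 2 -> isDist nu /\ Rset nu)
  (k : nat) (lam : 'I_k -> R) (nu : 'I_k -> {ffun Omega -> R}) (a : 'I_k -> A)
  (Hlam0 : forall i, 0 <= lam i)
  (Hlam1 : \sum_(i < k) lam i = 1)
  (Hnu : forall i, isDist (nu i))
  (Hbayes : forall w, \sum_(i < k) lam i * nu i w = mu0 w)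
  (nu' : 'I_k -> {ffun Omega -> R}) (eps p : R)
  (Heps0 : 0 <= eps)
  (Hnu' : forall i, isDist (nu' i))
  (Heps : forall i, nu' i != nu i -> dist2 (nu' i) (nu i) <= eps)
  (Hp : \sum_(i < k | nu' i != nu i) lam i <= p) :
  exists (lamh : 'I_k -> R) (lamp : R) (nup : {ffun Omega -> R}),
    [/\ (forall i, 0 <= lamh i) /\ 0 <= lamp /\ \sum_(i < k) lamh i + lamp = 1,
        dist2 nup mu0 <= delta / 2 /\ (isDist nup /\ Rset nup),
        (forall w, \sum_(i < k) lamh i * nu' i w + lamp * nup w = mu0 w),
        `|US uS (scheme lam nu a) - US uS (rcons (scheme lamh nu' a) (lamp, nup, a0))|
           <= Umax uS * (Num.sqrt (#|Omega|%:R) + 4 / delta) * p * eps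
      & ((forall w, \sum_(i < k) lam i * nu' i w = mu0 w) -> lamp = 0)].
Proof.
have p0 : 0 <= p by apply: le_trans Hp; apply: sumr_ge0 => i _.
have Hci : forall i, nu' i != nu i ->
    Num.sqrt (\sum_w (nu i w - nu' i w) ^+ 2) <= eps.
  move=> i /Heps; rewrite /dist2.
  by under eq_bigr => w _ do rewrite -sqrrN opprB.
pose d w := mu0 w - \sum_(i < k) lam i * nu' i w.
have hd : forall w, d w = \sum_(i < k) lam i * (nu i w - nu' i w).
  move=> w; rewrite /d -Hbayes -sumrB; apply: eq_bigr => i _; ring.
have sumd : \sum_w d w = 0.
  under eq_bigr => w _ do rewrite hd.
  rewrite exchange_big /= big1 // => i _.
  rewrite -mulr_sumr sumrB (proj2 (Hnu i)) (proj2 (Hnu' i)); ring.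
pose D := Num.sqrt (\sum_w d w ^+ 2).
have D0 : 0 <= D by exact: sqrtr_ge0.
have hd0 : D = 0 -> forall w, d w = 0.
  move=> /eqP; rewrite sqrtr_eq0 => hle w.
  have hs : \sum_w d w ^+ 2 = 0.
    by apply/le_anti; rewrite hle; apply: sumr_ge0 => v _; exact: sqr_ge0.
  have := psumr_eq0P (fun v _ => sqr_ge0 (d v)) hs (i:=w) isT.
  by move/eqP; rewrite sqrf_eq0 => /eqP.
have Dle : D <= p * eps.
  have h : D ^+ 2 <= p * eps * D.
    rewrite sqr_sqrtr; last by apply: sumr_ge0 => v _; exact: sqr_ge0.
    have -> : \sum_w d w ^+ 2 = \sum_(i < k) lam i * \sum_w (nu i w - nu' i w) * d w.
      under eq_bigr => w _ do rewrite expr2 {1}hd mulr_suml.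
      rewrite exchange_big; apply: eq_bigr => i _ /=; rewrite mulr_sumr.
      by apply: eq_bigr => w _; ring.
    apply: le_trans (_ : _ <= \sum_(i < k) (if nu' i != nu i then lam i * (eps * D) else 0)) _.
      apply: ler_sum => i _; case: eqVneq => [E|ne] /=.
        by rewrite E big1 ?mulr0 // => w _; rewrite subrr mul0r.
      apply: ler_wpM2l; first exact: Hlam0.
      apply: le_trans (ler_norm _) _; apply: le_trans (normCS _ _) _.
      apply: ler_wpM2r; [exact: D0 | exact: Hci].
    rewrite -big_mkcond -mulr_suml mulrA.
    apply: ler_wpM2r; first exact: D0.
    by apply: ler_wpM2r; [exact: Heps0 | exact: Hp].
  have pe0 : 0 <= p * eps by exact: mulr_ge0.
  nra.
pose t := 2 * D / (delta + 2 * D).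
pose c := if D == 0 then 0 else delta / (2 * D).
have den : 0 < delta + 2 * D by lra.
have ht : t * (delta + 2 * D) = 2 * D by rewrite /t divfK // gt_eqF.
have t0 : 0 <= t by apply: divr_ge0; lra.
have tD0 : 0 <= t * D by exact: mulr_ge0.
have t1 : t <= 1 by nra.
have tdel : t * delta <= 2 * (p * eps) by nra.
have htc : D != 0 -> t * c = 1 - t.
  move=> nz; rewrite /c (negbTE nz) mulrA.
  have -> : t * delta = (1 - t) * (2 * D) by nra.
  rewrite mulfK //; rewrite mulf_neq0 //; lra.
pose nup := [ffun w => mu0 w + c * d w].
have sumnup : \sum_w nup w = 1.
  under eq_bigr => w _ do rewrite ffunE.
  by rewrite big_split /= -mulr_sumr sumd mulr0 addr0 (proj2 Hmu0).
have distnup : dist2 nup mu0 = `|c| * D.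
  rewrite /dist2.
  have e : forall w, (nup w - mu0 w) ^+ 2 = c ^+ 2 * d w ^+ 2.
    by move=> w; rewrite ffunE; ring.
  under eq_bigr => w _ do rewrite e.
  rewrite -mulr_sumr sqrtrM ?sqr_ge0 // sqrtr_sqr //.
have distle : dist2 nup mu0 <= delta / 2.
  rewrite distnup /c; case: eqP => [->|nz].
    by rewrite normr0 mul0r divr_ge0 // ltW.
  rewrite ger0_norm; last by apply: divr_ge0; lra.
  have -> : delta / (2 * D) * D = delta / 2.
    field; apply/eqP; exact: nz.
  by [].
have [Hnup Rnup] := HR nup sumnup distle.
exists (fun i => (1 - t) * lam i), t, nup; split.
- split; first by move=> i; apply: mulr_ge0 => //; rewrite subr_ge0.
  split => //; rewrite -mulr_sumr Hlam1; ring.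
- by split.
- move=> w.
  have -> : \sum_(i < k) (1 - t) * lam i * nu' i w = (1 - t) * (mu0 w - d w).
    have -> : mu0 w - d w = \sum_(i < k) lam i * nu' i w by rewrite /d; ring.
    rewrite mulr_sumr; apply: eq_bigr => i _; ring.
  rewrite ffunE; have [D00|nz] := eqVneq D 0.
    rewrite (hd0 D00 w); ring.
  rewrite (_ : t * (mu0 w + c * d w) = t * mu0 w + (t * c) * d w); last by ring.
  rewrite (htc nz); ring.
- set U := Umax uS.
  have U0 : 0 <= U by exact: Umax_ge0.
  have -> : forall s x, US uS (rcons s x) = US uS s + x.1.1 * \sum_w x.1.2 w * uS x.2 w.
    by move=> s x; rewrite /US -cats1 big_cat big_seq1.
  rewrite !US_scheme /=.
  set E := fun i => \sum_w nu i w * uS (a i) w.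
  set E' := fun i => \sum_w nu' i w * uS (a i) w.
  set Ep := \sum_w nup w * uS a0 w.
  rewrite -/(E _) -/(E' _).
  set SE := \sum_(i < k) lam i * E i.
  set SE' := \sum_(i < k) lam i * E' i.
  have s1 : \sum_(i < k) lam i * (E i - E' i) = SE - SE'.
    by rewrite /SE /SE' -sumrB; apply: eq_bigr => i _; ring.
  have s2 : \sum_(i < k) (1 - t) * lam i * E' i = (1 - t) * SE'.
    by rewrite /SE' mulr_sumr; apply: eq_bigr => i _; ring.
  rewrite s2.
  have bEp : `|Ep| <= U by apply: expect_le.
  have bSE' : `|SE'| <= U.
    apply: le_trans (ler_norm_sum _ _ _) _.
    apply: le_trans (_ : \sum_(i < k) lam i * U <= _).
      apply: ler_sum => i _; rewrite normrM ger0_norm //.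
      by apply: ler_wpM2l => //; apply: expect_le.
    by rewrite -mulr_suml Hlam1 mul1r.
  set sn := Num.sqrt (#|Omega|%:R).
  have sn0 : 0 <= sn by exact: sqrtr_ge0.
  have bX : `|SE - SE'| <= p * (U * (sn * eps)).
    rewrite -s1; apply: le_trans (ler_norm_sum _ _ _) _.
    apply: le_trans (_ : \sum_(i < k) (if nu' i != nu i then lam i * (U * (sn * eps)) else 0) <= _).
      apply: ler_sum => i _; rewrite normrM ger0_norm //.
      case: eqVneq => [Ei|ne] /=.
        by rewrite /E' Ei subrr normr0 mulr0.
      apply: ler_wpM2l => //.
      have -> : E i - E' i = \sum_w (nu i w - nu' i w) * uS (a i) w.
        by rewrite /E /E' -sumrB; apply: eq_bigr => w _; ring.
      apply: le_trans (ler_norm_sum _ _ _) _.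
      apply: le_trans (_ : \sum_w `|nu i w - nu' i w| * U <= _).
        by apply: ler_sum => w _; rewrite normrM; apply: ler_wpM2l => //; apply: Umax_ge.
      rewrite -mulr_suml mulrC; apply: ler_wpM2l => //.
      apply: le_trans (l1_le _) _.
      by apply: ler_wpM2l => //; apply: Hci.
    rewrite -big_mkcond -mulr_suml; apply: ler_wpM2r => //.
    by apply: mulr_ge0 => //; apply: mulr_ge0.
  have -> : SE - ((1 - t) * SE' + t * Ep) = (SE - SE') + t * (SE' - Ep) by ring.
  apply: le_trans (ler_normD _ _) _.
  rewrite normrM (ger0_norm t0).
  have bY : `|SE' - Ep| <= 2 * U.
    by apply: le_trans (ler_normB _ _) _; lra.
  have tY : t * `|SE' - Ep| <= t * (2 * U) by apply: ler_wpM2l.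
  have iv0 : 0 < delta^-1 by rewrite invr_gt0.
  have tt : t * (2 * U) <= (2 * (p * eps)) * delta^-1 * (2 * U).
    have -> : t = t * delta * delta^-1 by rewrite mulfK // gt_eqF.
    apply: ler_wpM2r; first lra.
    by apply: ler_wpM2r; [exact: ltW|].
  have -> : U * (sn + 4 / delta) * p * eps = p * (U * (sn * eps)) + (2 * (p * eps)) * delta^-1 * (2 * U).
    by rewrite /U; ring.
  lra.
- move=> Hb.
  have dz : forall w, d w = 0 by move=> w; rewrite /d Hb subrr.
  have Dz : D = 0.
    rewrite /D big1 ?sqrtr0 // => w _; rewrite dz; exact: expr0n.
  by rewrite /t Dz mulr0 mul0r.
Qed.
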